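(* Let $R$ be a ring and $n\in\{0,1,2,\dots\}\cup\{\infty\}$. The following are equivalent: (1) $l.\mathrm{fPD}(R)\leq n$; (2) $\mathscr{E}_{n}=\mathscr{E}_{n+1}$; (3) $\mathscr{E}_{n}=\mathscr{E}_{m}$ for some $m>n$; (4) $\mathscr{E}_{n}=\mathscr{E}_{m}$ for every $m>n$; (5) $\mathscr{E}_{n}=\mathscr{E}_{\infty}$.
   Context: $R$ is an associative ring with identity; modules are left $R$-modules; $\infty+1=\infty$. For a positive integer $k$, $\mathcal{P}^{<k}$ is the class of modules $M$ admitting an exact sequence $0\to P_j\to\cdots\to P_0\to M\to 0$ with $j\le k-1$ and every $P_i$ finitely generated projective; $\mathcal{P}^{<0}=\{0\}$; $\mathcal{P}^{<\infty}$ is the class of modules admitting such a sequence for some finite $j$. $l.\mathrm{fPD}(R)$ is the supremum of projective dimensions of modules in $\mathcal{P}^{<\infty}$. A short exact sequence $0\to A\to B\to C\to 0$ is $n$-exact if $0\to\mathrm{Hom}_R(M,A)\to\mathrm{Hom}_R(M,B)\to\mathrm{Hom}_R(M,C)\to0$ is exact for all $M\in\mathcal{P}^{<n+1}$; $\mathscr{E}_n$ denotes the class of all $n$-exact sequences. *)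

(* Defs.v *)
From HB Require Import structures.
From mathcomp Require Import all_boot all_order all_algebra.
Set Implicit Arguments. Unset Strict Implicit. Unset Printing Implicit Defensive.
Import GRing.Theory.
Local Open Scope ring_scope.

Inductive enat := Fin of nat | Inf.

Definition esucc (n : enat) : enat :=
  match n with Fin k => Fin k.+1 | Inf => Inf end.

Definition ele (a b : enat) : Prop :=
  match a, b with
  | _, Inf => True
  | Inf, Fin _ => False
  | Fin x, Fin y => (x <= y)%N
  end.

Section Modules.
Variable R : pzRingType.

Definition fin_gen (M : lmodType R) : Prop :=
  exists s : seq M, forall x : M,
    exists c : 'I_(size s) -> R, x = \sum_(i < size s) c i *: s`_i.

Definition surj {A B : lmodType R} (f : A -> B) : Prop :=
  forall y, exists x, f x = y.

Definition projective (P : lmodType R) : Prop :=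
  forall (B C : lmodType R) (g : {linear B -> C}) (h : {linear P -> C}),
    surj g -> exists k : {linear P -> B}, forall x, g (k x) = h x.

Definition fg_projective (P : lmodType R) : Prop := fin_gen P /\ projective P.

Definition ses {A B C : lmodType R} (f : {linear A -> B}) (g : {linear B -> C}) : Prop :=
  injective f /\ (forall y, g y = 0 <-> exists x, f x = y) /\ surj g.

(* [res Q j M]: an exact sequence 0 -> P_j -> ... -> P_0 -> M -> 0 with every
   P_i satisfying Q, encoded by splitting it into short exact sequences
   0 -> K -> P_0 -> M -> 0 with K having such a sequence of length j-1. *)
Fixpoint res (Q : lmodType R -> Prop) (j : nat) (M : lmodType R) : Prop :=
  match j with
  | 0 => exists (P : lmodType R) (f : {linear P -> M}),
           Q P /\ injective f /\ surj f
  | j'.+1 => exists (K P : lmodType R) (g : {linear K -> P}) (f : {linear P -> M}),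
           Q P /\ ses g f /\ res Q j' K
  end.

Definition P_lt (k : enat) (M : lmodType R) : Prop :=
  match k with
  | Fin 0 => forall x : M, x = 0
  | Fin k'.+1 => exists j, (j <= k')%N /\ res fg_projective j M
  | Inf => exists j, res fg_projective j M
  end.

Definition pd_le (d : enat) (M : lmodType R) : Prop :=
  match d with
  | Fin d' => exists j, (j <= d')%N /\ res projective j M
  | Inf => True
  end.

Definition lfPD_le (n : enat) : Prop :=
  forall M : lmodType R, P_lt Inf M -> pd_le n M.

(* Exactness of 0 -> Hom(M,A) -> Hom(M,B) -> Hom(M,C) -> 0. *)
Definition hom_exact (M : lmodType R) {A B C : lmodType R}
    (f : {linear A -> B}) (g : {linear B -> C}) : Prop :=
  [/\ (forall k1 k2 : {linear M -> A},
          (forall x, f (k1 x) = f (k2 x)) -> forall x, k1 x = k2 x),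
      (forall h : {linear M -> B},
          (forall x, g (h x) = 0) <-> exists k : {linear M -> A}, forall x, f (k x) = h x)
    & (forall h : {linear M -> C}, exists k : {linear M -> B}, forall x, g (k x) = h x)].

Definition n_exact (n : enat) {A B C : lmodType R}
    (f : {linear A -> B}) (g : {linear B -> C}) : Prop :=
  ses f g /\ forall M : lmodType R, P_lt (esucc n) M -> hom_exact M f g.

Definition E_eq (n m : enat) : Prop :=
  forall (A B C : lmodType R) (f : {linear A -> B}) (g : {linear B -> C}),
    n_exact n f g <-> n_exact m f g.

End Modules.

(* Main.v *)
From HB Require Import structures.
From mathcomp Require Import all_boot all_order all_algebra.
From mathcomp Require Import boolp.
Require Import Defs.
Set Implicit Arguments. Unset Strict Implicit. Unset Printing Implicit Defensive.
Import GRing.Theory.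
Local Open Scope ring_scope.



Section Infra.
Variable R : pzRingType.
Implicit Types U V W : lmodType R.

Definition mkLin (U V : lmodType R) (f : U -> V) (H : linear f) : {linear U -> V} :=
  HB.pack f (GRing.isLinear.Build R U V *:%R f H).
Lemma mkLinE U V f H x : @mkLin U V f H x = f x. Proof. by []. Qed.

Lemma comp_lin (U V W : lmodType R) (h : {linear V -> W}) (g : {linear U -> V}) :
  linear (h \o g).
Proof. by move=> a u v /=; rewrite !linearP. Qed.
Definition compL U V W h g := mkLin (@comp_lin U V W h g).

Lemma id_lin (U : lmodType R) : linear (@id U). Proof. by []. Qed.
Definition idL U := mkLin (@id_lin U).

Lemma zero_lin (U V : lmodType R) : linear (fun _ : U => 0 : V).
Proof. by move=> a u v; rewrite scaler0 addr0. Qed.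
Definition zeroL U V := mkLin (@zero_lin U V).

Lemma add_lin (U V : lmodType R) (f g : {linear U -> V}) : linear (fun x => f x + g x).
Proof. by move=> a u v; rewrite !linearP scalerDr addrACA. Qed.
Definition addL U V f g := mkLin (@add_lin U V f g).

Lemma opp_lin (U V : lmodType R) (f : {linear U -> V}) : linear (fun x => - f x).
Proof. by move=> a u v /=; rewrite linearP opprD scalerN. Qed.
Definition oppL U V f := mkLin (@opp_lin U V f).

Lemma addLE U V (f g : {linear U -> V}) x : addL f g x = f x + g x. Proof. by []. Qed.
Lemma oppLE U V (f : {linear U -> V}) x : oppL f x = - f x. Proof. by []. Qed.
Lemma idLE U x : idL U x = x. Proof. by []. Qed.
Lemma zeroLE U V x : zeroL U V x = 0. Proof. by []. Qed.
Lemma compLE U V W (h : {linear V -> W}) (g : {linear U -> V}) x : compL h g x = h (g x).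
Proof. by []. Qed.
Definition LE := (addLE, oppLE, idLE, zeroLE, compLE).

Lemma fD U V (f : {linear U -> V}) x y : f (x + y) = f x + f y. Proof. exact: linearD. Qed.
Lemma fB U V (f : {linear U -> V}) x y : f (x - y) = f x - f y. Proof. exact: linearB. Qed.
Lemma fN U V (f : {linear U -> V}) x : f (- x) = - f x. Proof. exact: linearN. Qed.
Lemma f0 U V (f : {linear U -> V}) : f 0 = 0. Proof. exact: linear0. Qed.
Lemma fZ U V (f : {linear U -> V}) a x : f (a *: x) = a *: f x. Proof. exact: linearZ. Qed.
Lemma fsum U V (f : {linear U -> V}) I (r : seq I) (P : pred I) (F : I -> U) :
  f (\sum_(i <- r | P i) F i) = \sum_(i <- r | P i) f (F i).
Proof. exact: linear_sum. Qed.

Lemma inj_factor (U V W : lmodType R) (g : {linear V -> W}) (phi : {linear U -> W}) :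
  injective g -> (forall x, exists y, g y = phi x) ->
  exists psi : {linear U -> V}, forall x, g (psi x) = phi x.
Proof.
move=> gi H.
pose psi x := projT1 (cid (H x)).
have psiE x : g (psi x) = phi x by rewrite /psi; case: cid.
have lin : linear psi.
  by move=> a u v; apply: gi; rewrite linearP !psiE linearP.
by exists (mkLin lin) => x; rewrite mkLinE psiE.
Qed.



Lemma ses_comp0 (A B C : lmodType R) (g : {linear A -> B}) (f : {linear B -> C}) :
  ses g f -> forall x, f (g x) = 0.
Proof. by case=> _ [H _] x; apply/H; exists x. Qed.

Definition FTP (U V : lmodType R) (phi : U -> V) : Prop :=
  forall (B C : lmodType R) (p : {linear B -> C}) (h : {linear V -> C}),
    surj p -> exists k : {linear U -> B}, forall x, p (k x) = h (phi x).

Lemma FTP_ext U V (phi psi : U -> V) : phi =1 psi -> FTP phi -> FTP psi.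
Proof.
move=> E H B C p h sp; have [k Hk] := H B C p h sp.
by exists k => x; rewrite Hk E.
Qed.

Lemma FTP_add U V (phi psi : U -> V) : FTP phi -> FTP psi -> FTP (fun x => phi x + psi x).
Proof.
move=> H1 H2 B C p h sp; have [k1 E1] := H1 B C p h sp; have [k2 E2] := H2 B C p h sp.
by exists (addL k1 k2) => x; rewrite mkLinE linearD E1 E2 linearD.
Qed.

Lemma FTP_0 U V : FTP (fun _ : U => 0 : V).
Proof. by move=> B C p h sp; exists (zeroL U B) => x; rewrite mkLinE !linear0. Qed.

Lemma FTP_opp U V (phi : U -> V) : FTP phi -> FTP (fun x => - phi x).
Proof.
move=> H B C p h sp; have [k E] := H B C p h sp.
by exists (oppL k) => x; rewrite mkLinE linearN E linearN.
Qed.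

Lemma FTP_sub U V (phi psi : U -> V) : FTP phi -> FTP psi -> FTP (fun x => phi x - psi x).
Proof. by move=> H1 H2; apply: FTP_add => //; apply: FTP_opp. Qed.

Lemma FTP_post U V W (phi : U -> V) (chi : {linear V -> W}) : FTP phi -> FTP (chi \o phi).
Proof.
move=> H B C p h sp; have [k E] := H B C p (compL h chi) sp.
by exists k => x; rewrite E.
Qed.

Lemma FTP_pre U0 U V (phi : U -> V) (chi : {linear U0 -> U}) : FTP phi -> FTP (phi \o chi).
Proof.
move=> H B C p h sp; have [k E] := H B C p h sp.
by exists (compL k chi) => x; rewrite mkLinE /= E.
Qed.

Lemma FTP_proj (P : lmodType R) : projective P <-> FTP (@id P).
Proof. by []. Qed.

Lemma FTP_through (U P V : lmodType R) (a : {linear U -> P}) (b : {linear P -> V}) :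
  projective P -> FTP (fun x => b (a x)).
Proof. by move=> /FTP_proj H; apply: (FTP_post b (FTP_pre a H)). Qed.

Lemma iso_proj (Q N : lmodType R) (e : {linear Q -> N}) :
  projective Q -> injective e -> surj e -> projective N.
Proof.
move=> pQ ie se.
have [ei Hei] : exists ei : {linear N -> Q}, forall x, e (ei x) = idL N x.
  by apply: inj_factor => // x; apply: se.
apply/FTP_proj; apply: (FTP_ext _ (FTP_through ei e pQ)) => x.
by rewrite Hei.
Qed.

Definition RP (d : nat) (N : lmodType R) := exists j, (j <= d)%N /\ res (@projective R) j N.

Fixpoint W (d : nat) (M : lmodType R) : Prop :=
  match d with
  | 0 => projective M
  | d'.+1 => forall (K P : lmodType R) (g : {linear K -> P}) (f : {linear P -> M}),
      projective P -> ses g f -> W d' K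
  end.

Record pkg (M : lmodType R) (d : nat) := Pkg {
  pN : lmodType R; pr : {linear M -> pN}; ps : {linear pN -> M}; pRP : RP d pN }.

Definition sumsr M d (l : seq (pkg M d)) (x : M) := \sum_(p <- l) ps p (pr p x).

Lemma sumsr_lin M d (l : seq (pkg M d)) : linear (sumsr l).
Proof.
move=> a u v; rewrite /sumsr scaler_sumr -big_split /=.
by apply: eq_bigr => p _; rewrite !linearP.
Qed.

Lemma proj_res0 (N : lmodType R) : res (@projective R) 0 N -> projective N.
Proof. by case=> Q [e [pQ [ie se]]]; apply: (iso_proj pQ ie se). Qed.



Lemma key_step (K P M : lmodType R) (g : {linear K -> P}) (f : {linear P -> M}) d
  (l : seq (pkg M d.+1)) : projective P -> ses g f ->
  exists (l' : seq (pkg K d)) (T : {linear P -> P}) (U : {linear M -> P}),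
    (forall y, f (T y) + f (U (f y)) = sumsr l (f y)) /\
    (forall x, T (g x) = g (sumsr l' x)).
Proof.
move=> pP sgf; have [gi [gfE fs]] := sgf.
elim: l => [|p l [l' [T [U [E1 E2]]]]].
  exists [::], (zeroL P P), (zeroL M P); split=> [y|x]; rewrite /sumsr !big_nil !mkLinE.
    by rewrite linear0 addr0.
  by rewrite linear0.
have [j [hj rj]] := pRP p.
case: j hj rj => [|j] hj rj.
  have pN0 := proj_res0 rj.
  have [u Hu] := FTP_through (pr p) (ps p) pN0 (idL M) fs.
  exists l', T, (addL U u); split=> [y|x]; last by apply: E2.
  by rewrite /sumsr big_cons mkLinE linearD addrA E1 Hu mkLinE addrC.
case: rj => L [Q [g' [f' [pQ [sgf' rj']]]]].
have [gi' [gfE' fs']] := sgf'.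
have [rho Hrho] := pP _ _ f' (compL (pr p) f) fs'.
have [sig Hsig] := pQ _ _ f (compL (ps p) f') fs.
have [r' Hr'] : exists r' : {linear K -> L}, forall x, g' (r' x) = compL rho g x.
  apply: inj_factor => // x; apply/gfE'.
  by rewrite mkLinE /= Hrho mkLinE /= (ses_comp0 sgf) linear0.
have [s' Hs'] : exists s' : {linear L -> K}, forall x, g (s' x) = compL sig g' x.
  apply: inj_factor => // x; apply/gfE.
  by rewrite mkLinE /= Hsig mkLinE /= (ses_comp0 sgf') linear0.
exists (Pkg r' s' (ex_intro _ j (conj hj rj')) :: l'), (addL T (compL sig rho)), U.
split=> [y|x].
  rewrite /sumsr big_cons !mkLinE /= linearD -addrA [f (sig _) + _]addrC addrA E1.
  by rewrite Hsig mkLinE /= Hrho mkLinE /= addrC.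
rewrite /sumsr big_cons !mkLinE /= E2 linearD addrC; congr (_ + _).
by have := Hr' x; rewrite mkLinE /= => <-; have := Hs' (r' x); rewrite mkLinE /= => <-.
Qed.

Lemma key d : forall (M : lmodType R) (l : seq (pkg M d)),
  FTP (fun x => x - sumsr l x) -> W d M.
Proof.
elim: d => [|d IH] M l H.
  apply/FTP_proj.
  have H2 : FTP (sumsr l).
    rewrite /sumsr; elim: l {H} => [|p l IHl].
      by apply: (FTP_ext _ (@FTP_0 M M)) => x; rewrite big_nil.
    have H3 : FTP (fun x => ps p (pr p x) + \sum_(q <- l) ps q (pr q x)).
      apply: FTP_add => //.
      have [j [hj rj]] := pRP p; move: hj rj; rewrite leqn0 => /eqP -> rj.
      exact: FTP_through (proj_res0 rj).
    by apply: FTP_ext H3 => x; rewrite big_cons.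
  by apply: (FTP_ext _ (FTP_add H H2)) => x; rewrite subrK.
move=> K P g f pP sgf.
have [gi [gfE fs]] := sgf.
have [l' [T [U [E1 E2]]]] := key_step l pP sgf.
have [k Hk] := H _ _ f (idL M) fs.
pose tau := addL (idL P) (oppL (addL T (addL (compL U f) (compL k f)))).
have [th Hth] : exists th : {linear P -> K}, forall y, g (th y) = tau y.
  apply: inj_factor => // y; apply/gfE.
  by rewrite /tau !LE (fB f) !(fD f) Hk idLE addrA E1 addrCA subrr addr0 subrr.
apply: (IH K l').
apply: (FTP_ext _ (FTP_through g th pP)) => x.
apply: gi; rewrite Hth /tau !LE E2 !(ses_comp0 sgf) !f0 !addr0.
by rewrite fB.
Qed.

End Infra.

Section Q.
Variable R : pzRingType.
Record subm (V : lmodType R) := Subm { smP :> V -> Prop; sm0 : smP 0;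
  smB : forall x y, smP x -> smP y -> smP (x - y);
  smZ : forall a x, smP x -> smP (a *: x) }.

Section QuotDef.
Variables (V : lmodType R) (S : subm V).

Lemma smN x : S x -> S (- x).
Proof. by move=> h; have := smB (sm0 S) h; rewrite sub0r. Qed.
Lemma smD x y : S x -> S y -> S (x + y).
Proof. by move=> hx hy; have := smB hx (smN hy); rewrite opprK. Qed.

Definition pickP (P : V -> Prop) : V :=
  match pselect (exists x, P x) with left h => projT1 (cid h) | right _ => 0 end.
Lemma pickPP (P : V -> Prop) : (exists x, P x) -> P (pickP P).
Proof. by rewrite /pickP; case: pselect => // h _; case: cid. Qed.

Definition canon (v : V) := pickP (fun w => S (w - v)).
Lemma canonS v : S (canon v - v).
Proof. by apply: (pickPP (P := fun w => S (w - v))); exists v; rewrite subrr; apply: sm0. Qed.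
Lemma canon_eq v w : S (v - w) -> canon v = canon w.
Proof.
move=> h; rewrite /canon; congr pickP; apply: funext => u; apply: propext; split => H.
  by have := smD H h; rewrite addrA subrK.
by have := smB H h; rewrite opprB addrA subrK.
Qed.

Definition quot := {v : V | canon v == v}.
HB.instance Definition _ := [isSub for @sval V (fun v => canon v == v)].
HB.instance Definition _ := [Choice of quot by <:].

Lemma canon_idem v : canon (canon v) == canon v.
Proof. by apply/eqP/canon_eq/canonS. Qed.
Definition qc (v : V) : quot := exist _ (canon v) (canon_idem v).

Lemma qcS v : S (val (qc v) - v). Proof. exact: canonS. Qed.
Lemma qc_eq v w : qc v = qc w <-> S (v - w).
Proof.
split=> [E|h]; last by apply: val_inj; rewrite /= (canon_eq h).
have E' : canon v = canon w by have := congr1 val E.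
have := smB (canonS w) (canonS v); rewrite E'.
by rewrite opprB addrC addrA subrK.
Qed.
Lemma qcE (x : quot) : qc (val x) = x.
Proof. by apply: val_inj => /=; apply/eqP; case: x. Qed.

Lemma qcD_l u w : qc (val (qc u) + w) = qc (u + w).
Proof. by apply/qc_eq; rewrite opprD addrACA subrr addr0; apply: qcS. Qed.
Lemma qcD_r u w : qc (w + val (qc u)) = qc (w + u).
Proof. by rewrite addrC qcD_l addrC. Qed.
Lemma qcN u : qc (- val (qc u)) = qc (- u).
Proof. by apply/qc_eq; rewrite -opprD; apply/smN/qcS. Qed.
Lemma qcZ a u : qc (a *: val (qc u)) = qc (a *: u).
Proof. by apply/qc_eq; rewrite -scalerBr; apply/smZ/qcS. Qed.

Definition qzero := qc 0.
Definition qopp (x : quot) := qc (- val x).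
Definition qadd (x y : quot) := qc (val x + val y).
Definition qscale a (x : quot) := qc (a *: val x).

Lemma qaddA : associative qadd.
Proof. by move=> x y z; rewrite /qadd qcD_l qcD_r addrA. Qed.
Lemma qaddC : commutative qadd.
Proof. by move=> x y; rewrite /qadd addrC. Qed.
Lemma qadd0 : left_id qzero qadd.
Proof. by move=> x; rewrite /qadd /qzero qcD_l add0r qcE. Qed.
Lemma qaddN : left_inverse qzero qopp qadd.
Proof. by move=> x; rewrite /qadd /qopp qcD_l addNr. Qed.
HB.instance Definition _ := GRing.isZmodule.Build quot qaddA qaddC qadd0 qaddN.

Lemma qscaleA a b x : qscale a (qscale b x) = qscale (a * b) x.
Proof. by rewrite /qscale qcZ scalerA. Qed.
Lemma qscale1 : left_id 1 qscale.
Proof. by move=> x; rewrite /qscale scale1r qcE. Qed.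
Lemma qscaleDr : right_distributive qscale +%R.
Proof.
by move=> a x y; rewrite /qscale /GRing.add /= /qadd qcZ qcD_l qcD_r scalerDr.
Qed.
Lemma qscaleDl x : {morph qscale^~ x: a b / a + b}.
Proof. by move=> a b; rewrite /qscale /GRing.add /= /qadd qcD_l qcD_r scalerDl. Qed.
HB.instance Definition _ := GRing.Zmodule_isLmodule.Build R quot qscaleA qscale1 qscaleDr qscaleDl.

Lemma qc_lin : linear qc.
Proof.
move=> a u v; change (qc (a *: u + v) = qadd (qscale a (qc u)) (qc v)).
rewrite /qadd /qscale qcD_l qcD_r; apply/qc_eq.
rewrite opprD addrACA subrr addr0 -scalerBr; apply/smZ.
by rewrite -opprB; apply/smN/qcS.
Qed.

Lemma qc_surj (x : quot) : exists v, qc v = x.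
Proof. by exists (val x); apply: qcE. Qed.

Lemma qc_val_lin (N : lmodType R) (phi : {linear V -> N}) :
  (forall v, S v -> phi v = 0) -> forall v, phi (val (qc v)) = phi v.
Proof. by move=> h v; apply/eqP; rewrite -subr_eq0 -linearB; apply/eqP/h/qcS. Qed.

Lemma qdesc (N : lmodType R) (phi : {linear V -> N}) : (forall v, S v -> phi v = 0) ->
  exists psi : {linear quot -> N}, forall v, psi (qc v) = phi v.
Proof.
move=> h.
have lin : linear (fun x : quot => phi (val x)).
  move=> a x y; change (phi (val (qadd (qscale a x) y)) = a *: phi (val x) + phi (val y)).
  by rewrite /qadd /qscale qc_val_lin // linearD qc_val_lin // linearZ.
pose psi : {linear quot -> N} := HB.pack (fun x : quot => phi (val x)) (GRing.isLinear.Build R quot N *:%R _ lin).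
exists psi.
by move=> v; apply: qc_val_lin.
Qed.

End QuotDef.

Section SubDef.
Variables (V : lmodType R) (S : subm V).
Definition subt := {v : V | `[< S v >]}.
HB.instance Definition _ := [isSub for @sval V (fun v => `[< S v >])].
HB.instance Definition _ := [Choice of subt by <:].
Lemma subP (x : subt) : S (val x). Proof. exact/asboolP/(valP x). Qed.
Definition mks v (h : S v) : subt := exist _ v (introT (asboolP _) h).
Definition szero := mks (sm0 S).
Definition sopp (x : subt) := mks (smN (subP x)).
Definition sadd (x y : subt) := mks (smD (subP x) (subP y)).
Definition sscale a (x : subt) := mks (smZ a (subP x)).
Lemma saddA : associative sadd.
Proof. by move=> x y z; apply: val_inj; rewrite /= addrA. Qed.
Lemma saddC : commutative sadd.
Proof. by move=> x y; apply: val_inj; rewrite /= addrC. Qed.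
Lemma sadd0 : left_id szero sadd.
Proof. by move=> x; apply: val_inj; rewrite /= add0r. Qed.
Lemma saddN : left_inverse szero sopp sadd.
Proof. by move=> x; apply: val_inj; rewrite /= addNr. Qed.
HB.instance Definition _ := GRing.isZmodule.Build subt saddA saddC sadd0 saddN.
Lemma sscaleA a b x : sscale a (sscale b x) = sscale (a * b) x.
Proof. by apply: val_inj; rewrite /= scalerA. Qed.
Lemma sscale1 : left_id 1 sscale.
Proof. by move=> x; apply: val_inj; rewrite /= scale1r. Qed.
Lemma sscaleDr : right_distributive sscale +%R.
Proof. by move=> a x y; apply: val_inj; rewrite /= scalerDr. Qed.
Lemma sscaleDl x : {morph sscale^~ x: a b / a + b}.
Proof. by move=> a b; apply: val_inj; rewrite /= scalerDl. Qed.
HB.instance Definition _ := GRing.Zmodule_isLmodule.Build R subt sscaleA sscale1 sscaleDr sscaleDl.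
Lemma sval_lin : linear (fun x : subt => val x). Proof. by []. Qed.
End SubDef.
End Q.

Section Part2.
Variable R : pzRingType.

Lemma res_mono (Q Q' : lmodType R -> Prop) : (forall N, Q N -> Q' N) ->
  forall j M, res Q j M -> res Q' j M.
Proof.
move=> H; elim=> [|j IH] M /=.
  by case=> P [f [qP rest]]; exists P, f; split=> //; apply: H.
case=> K [P [g [f [qP [s r]]]]]; exists K, P, g, f; split; first by apply: H.
by split=> //; apply: IH.
Qed.

Lemma fg_surj (P M : lmodType R) (f : {linear P -> M}) : fin_gen P -> surj f -> fin_gen M.
Proof.
case=> s Hs fs; exists (map f s) => y.
have [x <-] := fs y; have [c ->] := Hs x.
rewrite size_map; exists c; rewrite fsum; apply: eq_bigr => i _.
by rewrite fZ (nth_map 0).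
Qed.

Lemma W_mono d (M : lmodType R) : W d M -> W d.+1 M.
Proof.
elim: d M => [|d IH] M /=; last first.
  by move=> H K P g f pP sgf; apply: IH (H K P g f pP sgf).
move=> pM K P g f pP sgf.
have [gi [gfE fs]] := sgf.
have [k Hk] := pM _ _ f (idL M) fs.
pose tau := addL (idL P) (oppL (compL k f)).
have [th Hth] : exists th : {linear P -> K}, forall y, g (th y) = tau y.
  apply: inj_factor => // y; apply/gfE.
  by rewrite /tau !LE (fB f) Hk idLE subrr.
apply/FTP_proj; apply: (FTP_ext _ (FTP_through g th pP)) => x.
by apply: gi; rewrite Hth /tau !LE (ses_comp0 sgf) f0 subr0.
Qed.

Lemma W_le j d (M : lmodType R) : (j <= d)%N -> W j M -> W d M.
Proof.
elim: d => [|d IH]; first by rewrite leqn0 => /eqP ->.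
rewrite leq_eqVlt => /orP [/eqP -> //|]; rewrite ltnS => jd WM.
by apply: W_mono; apply: IH.
Qed.

Lemma RP_W d (M : lmodType R) : RP d M -> W d M.
Proof.
case=> j [jd rj]; apply: (W_le jd).
apply: (@key _ j M [:: Pkg (idL M) (idL M) (ex_intro _ j (conj (leqnn j) rj))]).
by apply: (FTP_ext _ (@FTP_0 R M M)) => x; rewrite /sumsr big_cons big_nil !LE addr0 subrr.
Qed.

Lemma W_fgres L : forall (M : lmodType R), res (@fg_projective R) L M ->
  forall d, W d M -> exists j, (j <= d)%N /\ res (@fg_projective R) j M.
Proof.
elim: L => [|L IH] M rM d WM; first by exists 0.
case: rM => K [P [g [f [[fgP pP] [sgf rK]]]]].
case: d WM => [|d] WM.
  exists 0; split=> //=; exists M, (idL M); split; last first.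
    by split; [move=> x y | move=> y; exists y].
  by split=> //; apply: fg_surj fgP sgf.2.2.
have WK := WM K P g f pP sgf.
have [j [jd rj]] := IH K rK d WK.
by exists j.+1; split=> //; exists K, P, g, f.
Qed.

End Part2.

Section FS.
Variable R : pzRingType.
Variable X : eqType.

Record fsf := FSF { fsv : X -> R; fsp : exists l : seq X, forall x, fsv x != 0 -> x \in l }.
HB.instance Definition _ := gen_eqMixin fsf.
HB.instance Definition _ := gen_choiceMixin fsf.

Lemma fsf_eq (f g : fsf) : fsv f =1 fsv g -> f = g.
Proof.
case: f g => f pf [g pg] /= E; have E' := funext E; subst g.
by rewrite (Prop_irrelevance pf pg).
Qed.

Lemma fs0P : exists l : seq X, forall x, (fun _ : X => 0 : R) x != 0 -> x \in l.
Proof. by exists [::] => x; rewrite eqxx. Qed.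
Lemma fsaddP (f g : fsf) : exists l : seq X, forall x, (fun x => fsv f x + fsv g x) x != 0 -> x \in l.
Proof.
case: (fsp f) => lf Hf; case: (fsp g) => lg Hg; exists (lf ++ lg) => x /=.
rewrite mem_cat; case: (boolP (fsv f x == 0)) => [/eqP ->|/Hf -> //].
by rewrite add0r => /Hg ->; rewrite orbT.
Qed.
Lemma fsoppP (f : fsf) : exists l : seq X, forall x, (fun x => - fsv f x) x != 0 -> x \in l.
Proof. by case: (fsp f) => lf Hf; exists lf => x /=; rewrite oppr_eq0; apply: Hf. Qed.
Lemma fsscaleP a (f : fsf) : exists l : seq X, forall x, (fun x => a * fsv f x) x != 0 -> x \in l.
Proof.
case: (fsp f) => lf Hf; exists lf => x /=; case: (boolP (fsv f x == 0)) => [/eqP ->|/Hf //].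
by rewrite mulr0 eqxx.
Qed.

Definition fszero := FSF fs0P.
Definition fsadd f g := FSF (fsaddP f g).
Definition fsopp f := FSF (fsoppP f).
Definition fsscale a f := FSF (fsscaleP a f).

Lemma fsaddA : associative fsadd. Proof. by move=> f g h; apply: fsf_eq => x /=; rewrite addrA. Qed.
Lemma fsaddC : commutative fsadd. Proof. by move=> f g; apply: fsf_eq => x /=; rewrite addrC. Qed.
Lemma fsadd0 : left_id fszero fsadd. Proof. by move=> f; apply: fsf_eq => x /=; rewrite add0r. Qed.
Lemma fsaddN : left_inverse fszero fsopp fsadd. Proof. by move=> f; apply: fsf_eq => x /=; rewrite addNr. Qed.
HB.instance Definition _ := GRing.isZmodule.Build fsf fsaddA fsaddC fsadd0 fsaddN.
Lemma fsscaleA a b f : fsscale a (fsscale b f) = fsscale (a * b) f.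
Proof. by apply: fsf_eq => x /=; rewrite mulrA. Qed.
Lemma fsscale1 : left_id 1 fsscale. Proof. by move=> f; apply: fsf_eq => x /=; rewrite mul1r. Qed.
Lemma fsscaleDr : right_distributive fsscale +%R.
Proof. by move=> a f g; apply: fsf_eq => x /=; rewrite mulrDr. Qed.
Lemma fsscaleDl f : {morph fsscale^~ f: a b / a + b}.
Proof. by move=> a b; apply: fsf_eq => x /=; rewrite mulrDl. Qed.
HB.instance Definition _ := GRing.Zmodule_isLmodule.Build R fsf fsscaleA fsscale1 fsscaleDr fsscaleDl.

Lemma fsvD (f g : fsf) x : fsv (f + g) x = fsv f x + fsv g x. Proof. by []. Qed.
Lemma fsvN (f : fsf) x : fsv (- f) x = - fsv f x. Proof. by []. Qed.
Lemma fsvZ a (f : fsf) x : fsv (a *: f) x = a * fsv f x. Proof. by []. Qed.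
Lemma fsv0 x : fsv (0 : fsf) x = 0. Proof. by []. Qed.
Lemma fsvB (f g : fsf) x : fsv (f - g) x = fsv f x - fsv g x. Proof. by []. Qed.
Lemma fsv_sum I (r : seq I) (F : I -> fsf) x :
  fsv (\sum_(i <- r) F i) x = \sum_(i <- r) fsv (F i) x.
Proof. by elim: r => [|i r IH]; rewrite ?big_nil ?big_cons // fsvD IH. Qed.

Definition supp (f : fsf) : seq X := undup (projT1 (cid (fsp f))).
Lemma supp_uniq f : uniq (supp f). Proof. exact: undup_uniq. Qed.
Lemma suppP f x : fsv f x != 0 -> x \in supp f.
Proof. by rewrite mem_undup; case: cid => l Hl /=; apply: Hl. Qed.

Lemma cover_sum (V : zmodType) (G : X -> V) (l1 l2 : seq X) : uniq l1 -> uniq l2 ->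
  (forall x, G x != 0 -> x \in l1) -> (forall x, G x != 0 -> x \in l2) ->
  \sum_(x <- l1) G x = \sum_(x <- l2) G x.
Proof.
move=> u1 u2 h1 h2.
have step (l l' : seq X) : (forall x, G x != 0 -> x \in l') ->
    \sum_(x <- l) G x = \sum_(x <- filter (fun x => x \in l') l) G x.
  move=> h; rewrite big_filter [in RHS]big_mkcond; apply: eq_bigr => x _.
  case: (boolP (x \in l')) => // xl; apply/eqP; apply/negPn/negP => /h.
  by rewrite (negbTE xl).
rewrite (step l1 l2 h2) (step l2 l1 h1); apply: perm_big; apply: uniq_perm.
- exact: filter_uniq.
- exact: filter_uniq.
by move=> x; rewrite !mem_filter andbC.
Qed.

End FS.

Section Gsum.
Variable R : pzRingType.
Definition gsum (N : lmodType R) (y : seq N) (c : nat -> R) : N := \sum_(k < size y) c k *: y`_k.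

Lemma gsum_lin (N : lmodType R) (y : seq N) a c1 c2 :
  gsum y (fun k => a * c1 k + c2 k) = a *: gsum y c1 + gsum y c2.
Proof.
rewrite /gsum scaler_sumr -big_split; apply: eq_bigr => k _.
by rewrite scalerDl scalerA.
Qed.
Lemma gsum0 (N : lmodType R) (y : seq N) : gsum y (fun _ => 0) = 0.
Proof. by rewrite /gsum big1 // => k _; rewrite scale0r. Qed.
Lemma gsumB (N : lmodType R) (y : seq N) c1 c2 :
  gsum y (fun k => c1 k - c2 k) = gsum y c1 - gsum y c2.
Proof.
have -> : (fun k => c1 k - c2 k) = (fun k => (-1) * c2 k + c1 k).
  by apply: funext => k; rewrite mulN1r addrC.
by rewrite gsum_lin scaleN1r addrC.
Qed.
Lemma gsumZ (N : lmodType R) (y : seq N) a c : gsum y (fun k => a * c k) = a *: gsum y c.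
Proof.
have -> : (fun k => a * c k) = (fun k => a * c k + 0) by apply: funext => k; rewrite addr0.
by rewrite gsum_lin gsum0 addr0.
Qed.
Lemma gsum_ext (N : lmodType R) (y : seq N) c1 c2 :
  (forall k, (k < size y)%N -> c1 k = c2 k) -> gsum y c1 = gsum y c2.
Proof. by move=> h; apply: eq_bigr => k _; rewrite h. Qed.
Lemma gsum_map (N V : lmodType R) (h : {linear N -> V}) (y : seq N) c :
  gsum (map h y) c = h (gsum y c).
Proof.
rewrite /gsum fsum size_map; apply: eq_bigr => k _.
by rewrite fZ (nth_map 0).
Qed.

Lemma gen_map (N V : lmodType R) (y : seq N) (gen : forall z, exists c, z = gsum y c)
  (Fm : (nat -> R) -> V)
  (Flin : forall a c1 c2, Fm (fun k => a * c1 k + c2 k) = a *: Fm c1 + Fm c2)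
  (F0 : forall c, gsum y c = 0 -> Fm c = 0) :
  exists psi : {linear N -> V}, forall c, psi (gsum y c) = Fm c.
Proof.
have FE c c' : gsum y c = gsum y c' -> Fm c = Fm c'.
  move=> E.
  have -> : c = (fun k => 1 * (c k - c' k) + c' k).
    by apply: funext => k; rewrite mul1r subrK.
  by rewrite Flin F0 ?scaler0 ?add0r // gsumB E subrr.
pose coef z := projT1 (cid (gen z)).
have coefE z : z = gsum y (coef z) by rewrite /coef; case: cid.
have lin : linear (fun z => Fm (coef z)).
  move=> a z1 z2; rewrite -Flin; apply: FE.
  by rewrite gsum_lin -!coefE.
exists (mkLin lin) => c; rewrite mkLinE; apply: FE; by rewrite -coefE.
Qed.

End Gsum.

Section Aux.
Variable R : pzRingType.

Lemma fg_gsum (N : lmodType R) : fin_gen N -> exists s : seq N, forall z, exists c, z = gsum s c.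
Proof.
case=> s Hs; exists s => z; have [c ->] := Hs z.
exists (fun k => if insub k is Some i then c i else 0).
by apply: eq_bigr => i _; rewrite valK.
Qed.

Lemma res_fg j (N : lmodType R) : res (@fg_projective R) j N -> fin_gen N.
Proof.
case: j => [|j] /=.
  by case=> P [f [[fgP _] [_ fs]]]; apply: fg_surj fgP fs.
by case=> K [P [g [f [[fgP _] [sgf _]]]]]; apply: fg_surj fgP sgf.2.2.
Qed.

Lemma Plt_fg k (N : lmodType R) : P_lt (Fin k.+1) N -> fin_gen N.
Proof. by case=> j [_ rj]; apply: res_fg rj. Qed.

Lemma Plt_RP k (N : lmodType R) : P_lt (Fin k.+1) N -> RP k N.
Proof.
case=> j [jk rj]; exists j; split=> //.
by apply: res_mono rj => P [].
Qed.

Lemma hom_exact_of (N A B C : lmodType R) (f : {linear A -> B}) (g : {linear B -> C}) :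
  ses f g -> (forall h : {linear N -> C}, exists k : {linear N -> B}, forall x, g (k x) = h x) ->
  hom_exact N f g.
Proof.
move=> sfg H; have [fi [gfE gs]] := sfg; split=> //.
- by move=> k1 k2 E x; apply: fi; apply: E.
- move=> h; split=> [E|[k Hk] x]; last by rewrite -Hk (ses_comp0 sfg).
  by apply: inj_factor => // x; apply/gfE; apply: E.
Qed.

Lemma regular_lin (M : lmodType R) (b : M) : linear (fun r : R^o => (r : R) *: b).
Proof. by move=> a u v; rewrite scalerDl scalerA. Qed.

Lemma regular_Plt k : P_lt (Fin k.+1) (R^o : lmodType R).
Proof.
exists 0; split=> //; exists (R^o : lmodType R), (idL _); split; last first.
  by split; [move=> x y | move=> y; exists y].
split.
  exists [:: (1 : R^o)] => z; exists (fun _ => z).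
  by rewrite big_ord1 /= [RHS]/GRing.scale /= mulr1.
move=> B C g h gs; have [b Hb] := gs (h 1).
exists (mkLin (regular_lin b)) => x; rewrite mkLinE fZ Hb -fZ.
by congr (h _); rewrite [LHS]/GRing.scale /= mulr1.
Qed.

End Aux.

Section Hard.
Variables (R : pzRingType) (n : nat) (M : lmodType R).

Definition Idx := (seq M * ((nat -> R) -> Prop))%type.
HB.instance Definition _ := gen_eqMixin Idx.
HB.instance Definition _ := gen_choiceMixin Idx.

Definition cond (i : Idx) : Prop := exists N : lmodType R, P_lt (Fin n.+1) N /\
  exists y : seq N, [/\ size y = size i.1, (forall z : N, exists c, z = gsum y c),
     (forall c, gsum y c = 0 <-> i.2 c) & (forall c, i.2 c -> gsum i.1 c = 0)].

Definition phi (x : Idx * nat) : M := if `[< cond x.1 >] then x.1.1`_x.2 else 0.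

Lemma phiE i k : cond i -> phi (i, k) = i.1`_k.
Proof. by move=> h; rewrite /phi /=; case: asboolP. Qed.
Lemma phiN i k : ~ cond i -> phi (i, k) = 0.
Proof. by move=> h; rewrite /phi /=; case: asboolP. Qed.
Lemma phi_nz x : phi x != 0 -> (x.2 < size x.1.1)%N.
Proof.
case: x => i k; rewrite /phi /=; case: asboolP => _; last by rewrite eqxx.
move=> nz; rewrite ltnNge; apply/negP => hk; move: nz; by rewrite nth_default ?eqxx.
Qed.

Lemma cond_sub i : cond i ->
  [/\ i.2 (fun _ => 0), (forall c1 c2, i.2 c1 -> i.2 c2 -> i.2 (fun k => c1 k - c2 k))
    & (forall a c, i.2 c -> i.2 (fun k => a * c k))].
Proof.
case=> N [_ [y [_ _ E _]]]; split.
- by apply/E; rewrite gsum0.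
- by move=> c1 c2 /E h1 /E h2; apply/E; rewrite gsumB h1 h2 subrr.
- by move=> a c /E h; apply/E; rewrite gsumZ h scaler0.
Qed.

Notation F := (@fsf R (Idx * nat)%type).

Definition bigS (f : F) : Prop := forall i, cond i -> i.2 (fun k => fsv f (i, k)).

Lemma bigS0 : bigS 0.
Proof. by move=> i /cond_sub [h _ _]. Qed.
Lemma bigSB f g : bigS f -> bigS g -> bigS (f - g).
Proof. by move=> hf hg i ci; have [_ hB _] := cond_sub ci; apply: hB; [apply: hf|apply: hg]. Qed.
Lemma bigSZ a f : bigS f -> bigS (a *: f).
Proof. by move=> hf i ci; have [_ _ hZ] := cond_sub ci; apply: hZ; apply: hf. Qed.
Definition bigSm : subm F := Subm bigS0 bigSB bigSZ.

Definition pi0 (f : F) : M := \sum_(x <- supp f) fsv f x *: phi x.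

Lemma pi0_any f l : uniq l -> (forall x, fsv f x *: phi x != 0 -> x \in l) ->
  pi0 f = \sum_(x <- l) fsv f x *: phi x.
Proof.
move=> ul hl; apply: cover_sum => //; first exact: supp_uniq.
move=> x nz; apply: suppP; apply: contraNneq nz => ->; by rewrite scale0r.
Qed.

Lemma pi0_lin : linear pi0.
Proof.
move=> a f g.
pose l := undup (supp f ++ supp g ++ supp (a *: f + g)).
have cov (h : F) : (forall x, fsv h x != 0 -> x \in l) ->
    pi0 h = \sum_(x <- l) fsv h x *: phi x.
  move=> H; apply: pi0_any; first exact: undup_uniq.
  move=> x nz; apply: H; apply: contraNneq nz => ->; by rewrite scale0r.
rewrite (cov (a *: f + g)); last by move=> x /suppP; rewrite /l mem_undup !mem_cat => ->; rewrite !orbT.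
rewrite (cov f); last by move=> x /suppP; rewrite /l mem_undup !mem_cat => ->.
rewrite (cov g); last by move=> x /suppP; rewrite /l mem_undup !mem_cat => ->; rewrite !orbT.
rewrite scaler_sumr -big_split; apply: eq_bigr => x _.
by rewrite fsvD fsvZ scalerDl scalerA.
Qed.
Definition pi0L := mkLin pi0_lin.

Definition contrib (i : Idx) (f : F) : M := \sum_(k < size i.1) fsv f (i, nat_of_ord k) *: phi (i, nat_of_ord k).

Lemma blocks f (J : seq Idx) : uniq J -> (forall x, fsv f x != 0 -> x.1 \in J) ->
  pi0 f = \sum_(i <- J) contrib i f.
Proof.
move=> uJ hJ.
pose G x := fsv f x *: phi x.
have E1 : pi0 f = \sum_(x <- supp f) \sum_(i <- J) (if x.1 == i then G x else 0).
  rewrite /pi0; apply: eq_bigr => x _ /=.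
  case: (boolP (fsv f x == 0)) => [/eqP z|nz].
    by rewrite /G z scale0r big1 // => i _; case: ifP.
  rewrite (bigD1_seq x.1) ?hJ //= eqxx big1 ?addr0 // => i /negbTE.
  by rewrite eq_sym => ->.
rewrite E1 exchange_big /=; apply: eq_bigr => i _.
rewrite (@cover_sum _ _ _ (supp f) [seq (i, k) | k <- index_iota 0 (size i.1)]).
- rewrite big_map big_mkord; apply: eq_bigr => k _; by rewrite eqxx.
- exact: supp_uniq.
- rewrite map_inj_uniq ?iota_uniq //; by move=> k1 k2 [].
- move=> x; case: ifP => _; last by rewrite eqxx.
  move=> nz; apply: suppP; apply: contraNneq nz; rewrite /G => ->; by rewrite scale0r.
- case=> j k /=; case: (j =P i) => [-> nz|_]; last by rewrite eqxx.
  have : phi (i, k) != 0 by apply: contraNneq nz; rewrite /G => ->; rewrite scaler0.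
  move/phi_nz => /= hk; apply/mapP; exists k => //.
  by rewrite mem_index_iota hk.
Qed.

Lemma pi0_bigS f : bigS f -> pi0 f = 0.
Proof.
move=> hf.
rewrite (@blocks f (undup (map fst (supp f)))); first last.
- by move=> x /suppP hx; rewrite mem_undup; apply: map_f.
- exact: undup_uniq.
apply: big1 => i _.
case: (pselect (cond i)) => ci.
  rewrite /contrib (eq_bigr (fun k : 'I_(size i.1) => fsv f (i, nat_of_ord k) *: i.1`_k)).
    case: (ci) => N [_ [y [_ _ _ H]]]; exact: (H _ (hf i ci)).
  by move=> k _; rewrite phiE.
by apply: big1 => k _; rewrite phiN // scaler0.
Qed.

Definition B := quot bigSm.
Definition piB : {linear B -> M} := projT1 (cid (@qdesc R F bigSm M pi0L pi0_bigS)).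
Lemma piBE f : piB (qc bigSm f) = pi0 f.
Proof. by rewrite /piB; case: cid => psi /= ->. Qed.

Lemma lift_main (N : lmodType R) : P_lt (Fin n.+1) N ->
  forall h : {linear N -> M}, exists k : {linear N -> B}, forall z, piB (k z) = h z.
Proof.
move=> PN h.
have [s gen] := fg_gsum (Plt_fg PN).
pose i0 : Idx := (map h s, fun c => gsum s c = 0).
have ci0 : cond i0.
  exists N; split=> //; exists s; split => //=.
  - by rewrite size_map.
  - by move=> c hc; rewrite gsum_map hc f0.
pose ev (c : nat -> R) (x : Idx * nat) : R :=
  if x.1 == i0 then (if (x.2 < size s)%N then c x.2 else 0) else 0.
pose l0 := [seq (i0, k) | k <- index_iota 0 (size s)].
have evP c x : ev c x != 0 -> x \in l0.
  case: x => i k; rewrite /ev /=.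
  case: (i =P i0) => [->|_]; last by rewrite eqxx.
  case: ifP => hk; last by rewrite eqxx.
  by move=> _; apply/mapP; exists k => //; rewrite mem_index_iota hk.
pose e c : F := FSF (ex_intro _ l0 (evP c)).
have [k Hk] : exists k : {linear N -> B}, forall c, k (gsum s c) = qc bigSm (e c).
  apply: gen_map => //.
  - move=> a c1 c2.
    have -> : e (fun j => a * c1 j + c2 j) = a *: e c1 + e c2.
      apply: fsf_eq => x; rewrite fsvD fsvZ /= /ev; case: ifP => _; last by rewrite mulr0 addr0.
      by case: ifP => _; rewrite ?mulr0 ?addr0.
    exact: qc_lin.
  - move=> c hc; change (qc bigSm (e c) = qc bigSm 0); apply/qc_eq; rewrite subr0 => i ci.
    case: (i =P i0) => [->|ne].
      rewrite /= -hc; apply: gsum_ext => j hj; by rewrite /ev /= eqxx hj.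
    have -> : (fun j => fsv (e c) (i, j)) = (fun _ => 0).
      by apply: funext => j; rewrite /= /ev /=; case: (i =P i0).
    by have [] := cond_sub ci.
exists k => z; have [c ->] := gen z; rewrite Hk piBE.
rewrite (@pi0_any (e c) l0); first last.
- move=> x nz; apply: (evP c); apply: contraNneq nz => /= ->; by rewrite scale0r.
- by rewrite map_inj_uniq ?iota_uniq // => k1 k2 [].
rewrite big_map big_mkord -gsum_map /gsum size_map; apply: eq_bigr => j _.
by rewrite phiE //= /ev /= eqxx ltn_ord (nth_map 0).
Qed.

Lemma kerS0 : piB 0 = 0. Proof. exact: f0. Qed.
Lemma kerSB x y : piB x = 0 -> piB y = 0 -> piB (x - y) = 0.
Proof. by move=> hx hy; rewrite fB hx hy subrr. Qed.
Lemma kerSZ a x : piB x = 0 -> piB (a *: x) = 0.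
Proof. by move=> hx; rewrite fZ hx scaler0. Qed.
Definition kerS : subm B := Subm kerS0 kerSB kerSZ.
Definition A := subt kerS.
Definition iotaA : {linear A -> B} := mkLin (@sval_lin R B kerS).

Lemma ses_main : ses iotaA piB.
Proof.
split; first by move=> x y; apply: val_inj.
split.
  move=> y; split=> [h|[x <-]]; first by exists (mks (S := kerS) h).
  exact: (subP x).
move=> y; have [k Hk] := lift_main (@regular_Plt R n) (mkLin (regular_lin y)).
by exists (k 1); rewrite Hk mkLinE scale1r.
Qed.

Lemma nexact_main : n_exact (Fin n) iotaA piB.
Proof.
split; first exact: ses_main.
move=> N PN; apply: hom_exact_of; first exact: ses_main.
by move=> h; apply: lift_main PN h.
Qed.

Lemma sum_nz_ex (V : zmodType) m (G : 'I_m -> V) : \sum_(k < m) G k != 0 -> exists k, G k != 0.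
Proof.
move=> nz; case: (pselect (exists k, G k != 0)) => // H; move: nz.
rewrite big1 ?eqxx // => k _; apply/eqP/negPn/negP => hk; apply: H; by exists k.
Qed.

Lemma split_main
  (HE : forall (A0 B0 C0 : lmodType R) (f : {linear A0 -> B0}) (g : {linear B0 -> C0}),
     n_exact (Fin n) f g -> n_exact (Fin n.+1) f g) :
  P_lt (Fin n.+2) M -> W n M.
Proof.
move=> PM.
have [_ Hn1] := HE _ _ _ _ _ nexact_main.
have [_ _ Hl] := Hn1 M PM.
have [sM HsM] := Hl (idL M).
have [xs genM] := fg_gsum (Plt_fg PM).
pose J := undup (flatten [seq map fst (supp (val (sM x))) | x <- xs]).
pose qcL := mkLin (@qc_lin R F bigSm).
have rep x : exists f : F, sM x = qc bigSm f /\ forall y, fsv f y != 0 -> y.1 \in J.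
  have [c ->] := genM x.
  exists (\sum_(k < size xs) c k *: val (sM xs`_k)); split.
    rewrite -[qc bigSm _]/(qcL _) fsum /gsum fsum; apply: eq_bigr => k _.
    by rewrite !fZ mkLinE qcE.
  move=> y; rewrite fsv_sum => /sum_nz_ex [k]; rewrite fsvZ => nz.
  have : fsv (val (sM xs`_k)) y != 0 by apply: contraNneq nz => ->; rewrite mulr0.
  move/suppP => hy; rewrite mem_undup; apply/flattenP.
  exists (map fst (supp (val (sM xs`_k)))); last by apply: map_f.
  by apply/mapP; exists xs`_k => //; apply: mem_nth.
have pk i : cond i -> exists p : pkg M n, forall x f, sM x = qc bigSm f ->
    ps p (pr p x) = contrib i f.
  move=> ci; case: (ci) => N [PN [y [sz geny Ey Ly]]].
  pose t (f : F) : N := gsum y (fun k => fsv f (i, k)).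
  have tlin : linear t by move=> a f g; rewrite /t -gsum_lin.
  have [t' Ht'] := @qdesc R F bigSm N (mkLin tlin)
    (fun f hf => iffRL (Ey _) (hf i ci)).
  have [ps' Hps'] : exists psi : {linear N -> M}, forall c, psi (gsum y c) = gsum i.1 c.
    apply: gen_map => //; first by move=> a c1 c2; rewrite gsum_lin.
    by move=> c /Ey; apply: Ly.
  exists (Pkg (compL t' sM) ps' (Plt_RP PN)) => x f E.
  change (ps' (compL t' sM x) = contrib i f).
  rewrite compLE E Ht' mkLinE Hps' /contrib /gsum; apply: eq_bigr => k _.
  by rewrite phiE.
pose mk i : option (pkg M n) :=
  match pselect (cond i) with left h => Some (projT1 (cid (pk i h))) | right _ => None end.
have mkE i x f : sM x = qc bigSm f ->
    (if mk i is Some p then ps p (pr p x) else 0) = contrib i f.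
  move=> E; rewrite /mk; case: pselect => ci.
    by case: cid => p /= Hp; apply: Hp.
  by rewrite /contrib big1 // => k _; rewrite phiN // scaler0.
have sumE x f : sM x = qc bigSm f -> forall J0,
    sumsr (pmap mk J0) x = \sum_(i <- J0) contrib i f.
  move=> E; elim=> [|i J0 IH]; first by rewrite /sumsr !big_nil.
  rewrite big_cons -(mkE i x f E) -IH /sumsr /=.
  by case: (mk i) => [p|] /=; rewrite ?big_cons ?add0r.
apply: (@key R n M (pmap mk J)); apply: (FTP_ext _ (@FTP_0 R M M)) => x.
have [f [E hf]] := rep x.
rewrite (sumE x f E J) -(blocks (undup_uniq _) hf) -piBE -E HsM idLE subrr.
by [].
Qed.

Lemma hard_main
  (HE : forall (A0 B0 C0 : lmodType R) (f : {linear A0 -> B0}) (g : {linear B0 -> C0}),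
     n_exact (Fin n) f g -> n_exact (Fin n.+1) f g) :
  P_lt (Fin n.+2) M -> P_lt (Fin n.+1) M.
Proof.
move=> PM; have WM := split_main HE PM.
case: PM => j [_ rj]; exact: (W_fgres rj WM).
Qed.

End Hard.

Section Final.
Variable R : pzRingType.

Lemma zero_fgp (N : lmodType R) : (forall x : N, x = 0) -> fg_projective N.
Proof.
move=> z; split.
  by exists [::] => x; exists (fun _ => 0); rewrite big_ord0 (z x).
move=> B C g h gs; exists (zeroL N B) => x; by rewrite zeroLE (f0 g) (z x) (f0 h).
Qed.

Lemma Plt_le (a b : enat) (N : lmodType R) : ele a b -> P_lt a N -> P_lt b N.
Proof.
have z0 : (forall x : N, x = 0) -> res (@fg_projective R) 0 N.
  move=> z; exists N, (idL N); split; first exact: zero_fgp.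
  by split; [move=> x y | move=> y; exists y].
case: a => [[|k]|]; case: b => [[|m]|] //=.
- by move=> _ z; exists 0; split=> //; apply: z0.
- by move=> _ z; exists 0; apply: z0.
- by move=> km [j [jk rj]]; exists j; split=> //; apply: leq_trans jk km.
- by move=> _ [j [_ rj]]; exists j.
Qed.

Lemma ele_succ a b : ele a b -> ele (esucc a) (esucc b).
Proof. by case: a => [k|]; case: b => [m|]. Qed.

Lemma nexact_mono a b (A B C : lmodType R) (f : {linear A -> B}) (g : {linear B -> C}) :
  ele a b -> n_exact b f g -> n_exact a f g.
Proof.
move=> ab [s H]; split=> // N PN; apply: H.
by apply: Plt_le PN; apply: ele_succ.
Qed.

Lemma lfPD_Plt n (N : lmodType R) : lfPD_le R (Fin n) -> P_lt Inf N -> P_lt (Fin n.+1) N.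
Proof.
move=> H PN; have := H N PN; case=> j [jn rj].
have WN : W n N by apply: RP_W; exists j.
case: PN => L rL; exact: (W_fgres rL WN).
Qed.

Lemma dir1 n : lfPD_le R (Fin n) -> forall m, ele (Fin n.+1) m -> E_eq R (Fin n) m.
Proof.
move=> H m hm A B C f g; split; last first.
  by apply: nexact_mono; case: m hm => // k /= hk; apply: ltnW.
case=> s HN; split=> // N PN; apply: HN.
apply: (lfPD_Plt H); apply: Plt_le PN; by case: (esucc m).
Qed.

Lemma dir2 n m : ele (Fin n.+1) m -> E_eq R (Fin n) m -> lfPD_le R (Fin n).
Proof.
move=> hm E.
have HE : forall (A0 B0 C0 : lmodType R) (f : {linear A0 -> B0}) (g : {linear B0 -> C0}),
    n_exact (Fin n) f g -> n_exact (Fin n.+1) f g.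
  by move=> A0 B0 C0 f g /E h; apply: nexact_mono h.
move=> N [L rL].
have : P_lt (Fin n.+1) N.
  elim: L N rL => [|L IH] N rL; first by exists 0.
  case: rL => K [P [g [f [fgP [sgf rK]]]]].
  have [j [jn rj]] := IH K rK.
  apply: (hard_main HE); exists j.+1; split=> //; exists K, P, g, f; done.
case=> j [jn rj]; exists j; split=> //; by apply: res_mono rj => P [].
Qed.

End Final.

Theorem theorem2p5 (R : pzRingType) (n : enat) :
  [/\ (lfPD_le R n <-> E_eq R n (esucc n)),
      (lfPD_le R n <-> exists m, ele (esucc n) m /\ E_eq R n m),
      (lfPD_le R n <-> forall m, ele (esucc n) m -> E_eq R n m)
    & (lfPD_le R n <-> E_eq R n Inf)].
Proof.
case: n => [k|] /=.
  have r : ele (Fin k.+1) (Fin k.+1) by rewrite /= leqnn.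
  split.
  - split; [move=> H; exact: (dir1 H r) | exact: (dir2 r)].
  - split; [move=> H; exists (Fin k.+1); split=> //; exact: (dir1 H r)|].
    by case=> m [hm E]; apply: (dir2 hm E).
  - split; [move=> H m hm; exact: (dir1 H hm)|move=> H; apply: (dir2 r); exact: (H (Fin k.+1) r)].
  - by split; [move=> H; exact: (dir1 H (m := Inf) I)|apply: (@dir2 R k Inf I)].
have tr : lfPD_le R Inf by move=> M _.
have rf : E_eq R Inf Inf by move=> A B C f g.
split; try by split.
- by split=> // _; exists Inf.
- by split=> // _; case.
Qed.
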